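(* Let $\phi : A \to B$ be a positive linear map between monotone complete ordered vector spaces $A$ and $B$. Assume that $A$ is a vector lattice admitting some faithful positive linear functional. If $\phi$ is sequentially normal, then $\phi$ is normal.
   Context: An ordered vector space $W$ is monotone complete if every non-empty upward directed subset of $W$ that is bounded above has a supremum in $W$ (in particular every bounded above increasing sequence then has a supremum). A positive linear functional $\psi$ on an ordered vector space $W$ with positive cone $W_+$ is faithful if $\psi(a)>0$ for every $a\in W_+\setminus\{0\}$. A positive linear map $\phi:A\to B$ between monotone complete ordered vector spaces is called normal if $\phi(\sup J)=\sup_{j\in J}\phi(j)$ for every non-empty upper bounded upward directed subset $J$ of $A$, and sequentially normal if $\phi(\sup_n j_n)=\sup_n\phi(j_n)$ for every upper bounded increasing sequence $(j_n)$ in $A$. *)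

(* Defs.v *)
From HB Require Import structures.
From mathcomp Require Import all_boot all_order all_algebra.
From mathcomp Require Import reals.
Set Implicit Arguments. Unset Strict Implicit. Unset Printing Implicit Defensive.
Import Order.TTheory GRing.Theory Num.Theory.
Local Open Scope ring_scope.

Section OrdVS.
Variables (R : realType) (V : lmodType R).

(* W_+ is a proper convex cone: this is exactly what makes
   x <= y := (y - x \in W_+) a partial order compatible with the
   vector space operations. *)
Definition is_pos_cone (P : V -> Prop) : Prop :=
  [/\ P 0,
      (forall x y, P x -> P y -> P (x + y)),
      (forall (r : R) x, 0 <= r -> P x -> P (r *: x)) &
      (forall x, P x -> P (- x) -> x = 0)].

Definition ovle (P : V -> Prop) (x y : V) : Prop := P (y - x).

Definition is_ub (P : V -> Prop) (J : V -> Prop) (u : V) : Prop :=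
  forall j, J j -> ovle P j u.

Definition bounded_above (P : V -> Prop) (J : V -> Prop) : Prop :=
  exists u, is_ub P J u.

Definition is_sup (P : V -> Prop) (J : V -> Prop) (s : V) : Prop :=
  is_ub P J s /\ forall u, is_ub P J u -> ovle P s u.

Definition up_directed (P : V -> Prop) (J : V -> Prop) : Prop :=
  (exists j, J j) /\
  forall a b, J a -> J b -> exists c, [/\ J c, ovle P a c & ovle P b c].

Definition monotone_complete (P : V -> Prop) : Prop :=
  forall J, up_directed P J -> bounded_above P J -> exists s, is_sup P J s.

Definition vector_lattice (P : V -> Prop) : Prop :=
  forall x y, exists s, is_sup P (fun z => z = x \/ z = y) s.

Definition faithful_pos_functional (P : V -> Prop) (psi : V -> R) : Prop :=
  [/\ (forall x y, psi (x + y) = psi x + psi y),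
      (forall (r : R) x, psi (r *: x) = r * psi x),
      (forall x, P x -> 0 <= psi x) &
      (forall x, P x -> x <> 0 -> 0 < psi x)].

End OrdVS.

Section Maps.
Variables (R : realType) (A B : lmodType R).

Definition positive_map (PA : A -> Prop) (PB : B -> Prop) (phi : A -> B) :=
  forall x, PA x -> PB (phi x).

Definition increasing_seq (PA : A -> Prop) (j : nat -> A) :=
  forall n, ovle PA (j n) (j n.+1).

Definition normal_map (PA : A -> Prop) (PB : B -> Prop) (phi : A -> B) :=
  forall (J : A -> Prop), up_directed PA J -> bounded_above PA J ->
    forall s, is_sup PA J s ->
      is_sup PB (fun b => exists2 a, J a & b = phi a) (phi s).

Definition seq_normal_map (PA : A -> Prop) (PB : B -> Prop) (phi : A -> B) :=
  forall (j : nat -> A), increasing_seq PA j ->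
    bounded_above PA (fun a => exists n, a = j n) ->
    forall s, is_sup PA (fun a => exists n, a = j n) s ->
      is_sup PB (fun b => exists n, b = phi (j n)) (phi s).

End Maps.

(* Main.v *)
Require Import Defs.
From HB Require Import structures.
From mathcomp Require Import all_boot all_order all_algebra.
From mathcomp Require Import reals.
From mathcomp Require Import classical_sets lra.
From Stdlib Require Import Classical ClassicalEpsilon.
Import Order.TTheory GRing.Theory Num.Theory.
Local Open Scope ring_scope.

Section Aux.
Variables (R : realType) (V : lmodType R) (P : V -> Prop).
Hypothesis cone : is_pos_cone P.

Lemma ovle_refl x : ovle P x x.
Proof. by case: cone => H0 _ _ _; rewrite /ovle subrr. Qed.

Lemma ovle_trans x y z : ovle P x y -> ovle P y z -> ovle P x z.
Proof.
case: cone => _ Hadd _ _; rewrite /ovle => h1 h2.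
by move: (Hadd _ _ h2 h1); rewrite addrA subrK.
Qed.

Variable psi : V -> R.
Hypothesis fp : faithful_pos_functional P psi.

Lemma psiB x y : psi (x - y) = psi x - psi y.
Proof.
case: fp => Hadd Hsc _ _.
by rewrite Hadd -scaleN1r Hsc mulN1r.
Qed.

Lemma psi_mono x y : ovle P x y -> psi x <= psi y.
Proof.
case: fp => _ _ Hp _ h. by rewrite -subr_ge0 -psiB; apply: Hp.
Qed.
End Aux.
Arguments ovle_refl {R V P} cone {x}.
Arguments ovle_trans {R V P} cone {x y z}.
Arguments psiB {R V P psi} fp x y.
Arguments psi_mono {R V P psi} fp {x y}.

Theorem mainTheorem2 (R : realType) (A B : lmodType R)
    (PA : A -> Prop) (PB : B -> Prop) (phi : {linear A -> B}) :
  is_pos_cone PA -> is_pos_cone PB ->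
  monotone_complete PA -> monotone_complete PB ->
  vector_lattice PA ->
  (exists psi : A -> R, faithful_pos_functional PA psi) ->
  positive_map PA PB phi ->
  seq_normal_map PA PB phi ->
  normal_map PA PB phi.
Proof.
move=> coneA coneB mcA _ vlat [psi fp] posphi seqn.
move=> J [[j0 Jj0] dirJ] _ s [sub sleast].
split.
  move=> b [a Ja ->]; rewrite /ovle -linearB; apply: posphi; exact: sub.
move=> u ubu.
pose E : set R := fun r => exists2 a, J a & r = psi a.
have hsE : has_sup E.
  split; first by exists (psi j0); exists j0.
  exists (psi s) => r [a Ja ->]. by apply: (psi_mono fp); apply: sub.
pose al := sup E.
have ha : forall n : nat, exists a, J a /\ al - (n.+1%:R)^-1 < psi a.
  move=> n.
  have ep : 0 < (n.+1%:R : R)^-1 by rewrite invr_gt0 ltr0n.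
  have [r [a Ja ->] h] := @sup_adherent R E _ ep hsE.
  by exists a.
pose a := fun n => proj1_sig (constructive_indefinite_description _ (ha n)).
have Ha : forall n, J (a n) /\ al - (n.+1%:R)^-1 < psi (a n).
  move=> n; exact: (proj2_sig (constructive_indefinite_description _ (ha n))).
have hst : forall (x : A) (n : nat), exists c,
    J x -> [/\ J c, ovle PA x c & ovle PA (a n.+1) c].
  move=> x n; case: (classic (J x)) => Jx.
    have [c [Jc h1 h2]] := dirJ _ _ Jx (proj1 (Ha n.+1)).
    by exists c.
  by exists x.
pose st := fun x n => proj1_sig (constructive_indefinite_description _ (hst x n)).
have Hst : forall x n, J x -> [/\ J (st x n), ovle PA x (st x n) & ovle PA (a n.+1) (st x n)].
  move=> x n; exact: (proj2_sig (constructive_indefinite_description _ (hst x n))).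
pose js := fix f (n : nat) := match n with 0%N => a 0%N | n'.+1 => st (f n') n' end.
have Hjs : forall n, J (js n) /\ ovle PA (a n) (js n).
  elim=> [|n [IH1 IH2]] /=; first by split; [exact: (proj1 (Ha 0%N)) | exact: (ovle_refl coneA)].
  by have [h1 h2 h3] := Hst _ n IH1; split.
have incr : forall n, ovle PA (js n) (js n.+1).
  by move=> n /=; have [] := Hst _ n (proj1 (Hjs n)).
have mono : forall m n, (m <= n)%N -> ovle PA (js m) (js n).
  move=> m; elim=> [|n IH]; first by rewrite leqn0 => /eqP ->; exact: (ovle_refl coneA).
  rewrite leq_eqVlt => /orP [/eqP -> | ]; first exact: (ovle_refl coneA).
  rewrite ltnS => /IH h; apply: (ovle_trans coneA h). exact: incr.
pose S := fun x => exists n, x = js n.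
have dirS : up_directed PA S.
  split; first by exists (js 0%N); exists 0%N.
  move=> x y [m ->] [n ->]; exists (js (maxn m n)); split.
  - by exists (maxn m n).
  - by apply: mono; rewrite leq_maxl.
  - by apply: mono; rewrite leq_maxr.
have bS : bounded_above PA S.
  by exists s => x [n ->]; apply: sub; exact: (proj1 (Hjs n)).
have [t [tub tleast]] := mcA _ dirS bS.
have psijs : forall n, al - (n.+1%:R)^-1 < psi (js n).
  move=> n; apply: (lt_le_trans (proj2 (Ha n))); apply: (psi_mono fp).
  exact: (proj2 (Hjs n)).
have tubJ : forall j, J j -> ovle PA j t.
  move=> j Jj.
  have [d [dub dleast]] := vlat (j - t) 0.
  have Pd : PA d by have := dub 0 (or_intror erefl); rewrite /ovle subr0.
  have hd : forall n, psi d < (n.+1%:R)^-1.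
    move=> n.
    have [c [Jc h1 h2]] := dirJ _ _ Jj (proj1 (Hjs n)).
    have dle : ovle PA d (c - js n).
      apply: dleast => z [->|->]; rewrite /ovle.
      - have -> : c - js n - (j - t) = (c - j) + (t - js n) by rewrite opprB addrACA [RHS]addrACA [- js n + _]addrC.
        case: coneA => _ Hadd _ _; apply: Hadd; [exact: h1 | apply: tub; by exists n].
      - by rewrite subr0.
    have := psi_mono fp dle; rewrite (psiB fp).
    have : psi c <= al by apply: sup_upper_bound hsE _ _; exists c.
    have := psijs n. move=> q1 q2 q3. have q2p : (psi c <= al)%R := q2. have q1p : (al - (n.+1%:R)^-1 < psi (js n))%R := q1. have q3p : (psi d <= psi c - psi (js n))%R := q3. clear q1 q2 q3. move: (n.+1%:R)^-1 (psi c) (psi d) (psi (js n)) q1p q2p q3p => e x y z *; lra.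
  have psid0 : psi d <= 0.
    rewrite leNgt; apply/negP => pd.
    have ipd : 0 <= (psi d)^-1 by rewrite invr_ge0 ltW.
    have hb := archi_boundP ipd.
    have := hd (Num.bound (psi d)^-1).
    rewrite ltNge => /negP; apply.
    rewrite invf_ple ?posrE ?ltr0n //.
    by apply: ltW; apply: (lt_trans hb); rewrite ltr_nat.
  have d0 : d = 0.
    case: (classic (d = 0)) => // dn0.
    case: fp => _ _ _ Hf; by have := Hf _ Pd dn0; rewrite ltNge psid0.
  have := dub (j - t) (or_introl erefl).
  by rewrite /ovle d0 sub0r opprB.
have ssup : is_sup PA S s.
  split; first by move=> x [n ->]; apply: sub; exact: (proj1 (Hjs n)).
  move=> v vub; apply: (ovle_trans coneA _ (tleast _ vub)).
  by apply: sleast.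
have := seqn js incr bS s ssup.
case=> _; apply => b [n ->]; apply: ubu; exists (js n) => //; exact: (proj1 (Hjs n)).
Qed.
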